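(* Let $\phi:\mathbb{R}^{d}\to\mathbb{R}^{d}$ be a $C^{2}$ diffeomorphism, $x_{1}\in\mathbb{R}^{d}$, $v_{1}\in\mathbb{R}^{d}$ with $\|v_{1}\|=1$, and $x_{j}=\phi^{j-1}(x_{1})$. If $x_{1},\ldots,x_{D-1}$ are distinct, then the $(D-1)\times D_{\alpha}$ matrix $H(x_{1},v_{1})$ (defined in the context) has rank $D-1$, i.e. rank equal to its number of rows.
   Context: $\pi_{1}$ is the first coordinate projection, $\mathbf{e}_{1}=(1,0,\ldots,0)$. For a multi-index $\alpha\in\mathbb{Z}_{\geq0}^{d}$, $p_{\alpha}(x)=\prod_i(\pi_{i}x)^{\alpha_{i}}$; $\mathcal{I}_{2D-1}$ is the set of multi-indices with $|\alpha|\leq2D-1$, of cardinality $D_{\alpha}$. For $c=(c_{\alpha})\in\mathbb{R}^{D_{\alpha}}$, $\phi_{c}(x)=\phi(x)+\mathbf{e}_{1}\sum_{\alpha\in\mathcal{I}_{2D-1}}c_{\alpha}p_{\alpha}(x)$. The matrix $H(x_{1},v_{1})$ has row $j$ ($j=1,\ldots,D-1$) equal to the gradient with respect to $c$ at $c=0$ of $c\mapsto\pi_{1}\big(D(\phi_{c}^{j})(x_{1})\,v_{1}\big)$, where $D(\phi_c^j)(x_1)$ is the Jacobian matrix of $\phi_c^j$ at $x_1$. Equivalently, writing $F_{c}(x)=(\pi_{1}x,\pi_{1}\phi_{c}(x),\ldots,\pi_{1}\phi_{c}^{D-1}(x))$, one has $dF_{c}(x_{1})v_{1}=dF_{0}(x_{1})v_{1}+\binom{0}{H(x_{1},v_{1})}c+O(\|c\|^{2})$;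 e.g. the first row is $v_{1}^{T}\nabla p_{\alpha}(x_{1})$. *)

(* Defs.v *)
From HB Require Import structures.
From mathcomp Require Import all_boot all_order all_algebra.
From mathcomp Require Import all_classical all_reals all_analysis.
Set Implicit Arguments. Unset Strict Implicit. Unset Printing Implicit Defensive.
Import Order.TTheory GRing.Theory Num.Theory.
Import numFieldNormedType.Exports.
Local Open Scope ring_scope.

Section Defs.
Variables (R : realType) (d : nat).
Notation V := 'rV[R]_d.

(* first coordinate projection pi_1 (meaningful for d >= 1) *)
Definition pi1 (x : V) : R := \sum_(i < d | val i == 0%N) x 0 i.
Definition e1 : V := \row_(i < d) (val i == 0%N)%:R.

Definition sqnorm (v : V) : R := \sum_(i < d) v 0 i ^+ 2.

Definition C2 (f : V -> V) : Prop :=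
  (forall x, differentiable f x) /\
  (forall v x, differentiable ('D_v f) x) /\
  (forall v w, continuous ('D_w ('D_v f))).

Definition C2_diffeo (f : V -> V) : Prop :=
  C2 f /\ exists g : V -> V, cancel f g /\ cancel g f /\ C2 g.

Definition multi_index (D : nat) :=
  {a : {ffun 'I_d -> 'I_(2 * D)} | (\sum_(i < d) (a i : nat) <= (2 * D).-1)%N}.

Definition p_alpha D (a : multi_index D) (x : V) : R :=
  \prod_(i < d) x 0 i ^+ (val a i : nat).

Definition phi_c D (phi : V -> V) (c : multi_index D -> R) (x : V) : V :=
  phi x + (\sum_(a : multi_index D) c a * p_alpha a x) *: e1.

(* H(x1,v1): row j (j = 1..D-1, stored at index j-1) is the gradient in c at
   c = 0 of c |-> pi1 (D(phi_c^j)(x1) v1); entry (j, alpha) is the partial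
   derivative w.r.t. c_alpha at c = 0. *)
Definition Hmat D (phi : V -> V) (x1 v1 : V) : 'M[R]_(D.-1, #|{: multi_index D}|) :=
  \matrix_(j < D.-1, k < #|{: multi_index D}|)
    derive1 (fun t : R =>
      pi1 ('D_v1 (iter j.+1
                   (phi_c phi (fun a => if a == enum_val k then t else 0)))
                 x1)) 0.
End Defs.

(* Main.v *)
Require Import Defs.
From HB Require Import structures.
From mathcomp Require Import all_boot all_order all_algebra.
From mathcomp Require Import all_classical all_reals all_analysis.
Import Order.TTheory GRing.Theory Num.Theory.
Import numFieldNormedType.Exports.
From mathcomp Require Import zify.
Local Open Scope ring_scope.

Section Hasd.
Variable R : realType.

Definition hasd {W : normedModType R} (f : R -> W) t (df : W) := differentiable f t /\ 'd f t 1 = df.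

Section W.
Variable W : normedModType R.

Lemma scaler_is_bilinear :
  bilinear_for
    (GRing.Scale.Law.clone _ _ *:%R _) (GRing.Scale.Law.clone _ _ *:%R _)
    (@GRing.scale R W).
Proof.
split=> [u'|u] a x y /=.
- by rewrite scalerDl scalerA.
- by rewrite scalerDr scalerA mulrC -scalerA.
Qed.
HB.instance Definition _ := bilinear_isBilinear.Build R R W W _ _ (@GRing.scale R W)
  scaler_is_bilinear.

Lemma scale_cont : continuous (fun p : R * W => p.1 *: p.2).
Proof. move=> p. exact: (@scale_continuous R W p). Qed.


Lemma hasd_scale (s : R -> R) (F : R -> W) t ds dF :
  hasd s t ds -> hasd F t dF ->
  hasd (fun x => s x *: F x) t (s t *: dF + ds *: F t).
Proof.
move=> [ds' <-] [dF' <-].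
have -> : (fun x => s x *: F x) = (fun p : R * W => (@GRing.scale R W) p.1 p.2) \o (fun x => (s x, F x)) by [].
have dp := differentiable_pair ds' dF'.
have db : differentiable (fun p : R * W => (@GRing.scale R W) p.1 p.2) (s t, F t).
  exact: (differentiable_bilin (f := @GRing.scale R W)) scale_cont.
split; first exact: differentiable_comp.
rewrite diff_comp // diff_bilin /=; last exact: scale_cont.
by rewrite diff_pair.
Qed.

Lemma hasd_cst (c : W) t : hasd (fun _ => c) t 0.
Proof. split; first exact: differentiable_cst. by rewrite diff_cst. Qed.

Lemma hasd_add (f g : R -> W) t df dg : hasd f t df -> hasd g t dg ->
  hasd (fun x => f x + g x) t (df + dg).
Proof.
move=> [f1 <-] [g1 <-]; split; first exact: differentiableD.
by rewrite (diffD f1 g1).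
Qed.

Lemma hasd_sum (I : finType) (f : I -> R -> W) t (df : I -> W) :
  (forall i, hasd (f i) t (df i)) ->
  hasd (fun x => \sum_i f i x) t (\sum_i df i).
Proof.
move=> H; rewrite unlock /=; elim: (index_enum I) => [|i r IH] /=.
  exact: hasd_cst.
exact: hasd_add.
Qed.

Lemma hasd_comp (U : normedModType R) (F : R -> U) (g : U -> W) t dF :
  hasd F t dF -> differentiable g (F t) -> hasd (g \o F) t ('d g (F t) dF).
Proof.
move=> [F1 <-] g1; split; first exact: differentiable_comp.
by rewrite diff_comp.
Qed.

End W.
Arguments hasd_scale {W}.
Arguments hasd_cst {W}.
Arguments hasd_add {W}.
Arguments hasd_sum {W}.
Arguments hasd_comp {W U}.

Lemma hasd_id t : hasd (fun x : R => x) t 1.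
Proof.
have H := is_diff_id t.
split; first by case: H.
by rewrite diff_val.
Qed.

Lemma hasd_coord n (F : R -> 'rV[R]_n) t dF i :
  hasd F t dF -> hasd (fun x => F x 0 i) t (dF 0 i).
Proof.
move=> HF.
have @f : {linear 'rV[R]_n -> R}.
  by exists (fun N : 'rV[R]_n => N 0 i); do 2![eexists]; do ?[constructor];
     rewrite ?mxE// => ? *; rewrite ?mxE//; move=> ?; rewrite !mxE.
have fc : continuous f by exact: coord_continuous.
have := @hasd_comp _ _ F f t dF HF (linear_differentiable (F t) fc).
by rewrite diff_lin.
Qed.

End Hasd.
Arguments hasd {R W} f t df.
Arguments hasd_scale {R W s F t ds dF}.
Arguments hasd_cst {R W}.
Arguments hasd_add {R W f g t df dg}.
Arguments hasd_sum {R W I f t df}.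
Arguments hasd_comp {R W U F g t dF}.
Arguments hasd_id {R}.
Arguments hasd_coord {R n F t dF} i.


Section Dyn.
Variables (R : realType) (d : nat).
Local Notation V := 'rV[R]_d.
Variables (phi : V -> V) (x1 v1 : V).
Hypothesis Hphi1 : forall x, differentiable phi x.
Hypothesis Hphi2 : forall v x, differentiable ('D_v phi) x.

Definition Q2 (q : V -> R) :=
  (forall x, differentiable q x) /\ (forall v x, differentiable ('D_v q) x).

Definition Phi (q : V -> R) (t : R) (x : V) : V := phi x + (t * q x) *: e1 R d.
Definition Yt q k t := iter k (Phi q t) x1.
Definition Ut q k t := 'D_v1 (iter k (Phi q t)) x1.
Definition yy k := iter k phi x1.
Definition uu k := 'D_v1 (iter k phi) x1.

Lemma Phi0 q : Phi q 0 = phi.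
Proof. by apply/funext => x; rewrite /Phi mul0r scale0r addr0. Qed.

Lemma Yt0 q k : Yt q k 0 = yy k.
Proof. by rewrite /Yt Phi0. Qed.
Lemma Ut0 q k : Ut q k 0 = uu k.
Proof. by rewrite /Ut Phi0. Qed.

Lemma decomp {W : normedModType R} {f : V -> W} {y w} : differentiable f y ->
  'd f y w = \sum_i w 0 i *: 'D_('e_i) f y.
Proof.
move=> df; rewrite {1}(row_sum_delta w) linear_sum; apply: eq_bigr => i _.
by rewrite linearZ /= deriveE.
Qed.

Lemma diff_Phi q t x : Q2 q ->
  differentiable (Phi q t) x /\
  forall w, 'd (Phi q t) x w = 'd phi x w + (t * 'd q x w) *: e1 R d.
Proof.
move=> [Hq1 Hq2].
have E1 : (fun z => t * q z) = t *: q by [].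
have dk : differentiable (fun z => t * q z) x by rewrite E1; exact: differentiableZ.
have dl : differentiable (fun z => (t * q z) *: e1 R d) x by exact: differentiableZl.
have E2 : Phi q t = phi + (fun z => (t * q z) *: e1 R d) by [].
have h := diffD (Hphi1 x) dl.
rewrite -E2 in h.
split; first by rewrite E2; exact: differentiableD.
move=> w. 
have h2 := congr1 (fun f => f w) h. rewrite [LHS]h2 /=.
have h3 := congr1 (fun f => f w) (diffZl (e1 R d) dk).
have h4 := congr1 (fun f => f w) (diffZ t (Hq1 x)).
rewrite /= in h3 h4.
rewrite [X in _ + X = _]h3.
rewrite E1 [X in (X *: _)]h4.
by [].
Qed.
Lemma diff_iter q t k x : Q2 q -> differentiable (iter k (Phi q t)) x.
Proof.
move=> Hq; elim: k x => [|k IH] x.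
  have H := is_diff_id x. by case: H.
have -> : iter k.+1 (Phi q t) = Phi q t \o iter k (Phi q t) by [].
exact: (differentiable_comp (IH x) (diff_Phi q t (iter k (Phi q t) x) Hq).1).
Qed.

Lemma Ut_S q k t : Q2 q ->
  Ut q k.+1 t = 'd (Phi q t) (Yt q k t) (Ut q k t).
Proof.
move=> Hq; rewrite /Ut /Yt.
rewrite (deriveE _ (diff_iter _ _ _ _ Hq)).
have -> : iter k.+1 (Phi q t) = Phi q t \o iter k (Phi q t) by [].
have h := diff_comp (diff_iter q t k x1 Hq) (diff_Phi q t (iter k (Phi q t) x1) Hq).1.
rewrite [LHS](congr1 (fun f => f v1) h) /=.
by rewrite (deriveE _ (diff_iter _ _ _ _ Hq)).
Qed.

Fixpoint YU (a b : nat -> R) (k : nat) : V * V :=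
  if k is k'.+1 then
   ('d phi (yy k') (YU a b k').1 + a k' *: e1 R d,
    \sum_i ((uu k') 0 i *: 'd ('D_('e_i) phi) (yy k') (YU a b k').1
            + (YU a b k').2 0 i *: 'D_('e_i) phi (yy k')) + b k' *: e1 R d)
  else (0, 0).

Definition adat (q : V -> R) k := q (yy k).
Definition bdat (q : V -> R) k := 'D_(uu k) q (yy k).

Lemma hasd_eq {W : normedModType R} {f g : R -> W} {t df dg} :
  hasd f t df -> f = g -> df = dg -> hasd g t dg.
Proof. by move=> h <- <-. Qed.

Lemma YU_hasd q : Q2 q -> forall k,
  hasd (Yt q k) 0 (YU (adat q) (bdat q) k).1 /\ hasd (Ut q k) 0 (YU (adat q) (bdat q) k).2.
Proof.
move=> Hq; have [Hq1 Hq2] := Hq.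
elim=> [|k [IHY IHU]].
  split.
    exact: (hasd_cst x1 0).
  apply: (hasd_eq (hasd_cst v1 0)) => //.
  apply/funext => t; rewrite /Ut /=.
  by rewrite (derive_id x1 v1).
split.
  have h1 := hasd_comp IHY (Hphi1 (Yt q k 0)).
  have h2 := hasd_scale (hasd_id 0) (hasd_scale (hasd_comp IHY (Hq1 (Yt q k 0))) (hasd_cst (e1 R d) 0)).
  apply: (hasd_eq (hasd_add h1 h2)).
    by apply/funext => t; rewrite /Yt /= /Phi scalerA.
  by rewrite /= Yt0 scale0r add0r scale1r.
have hT := fun i : 'I_d => hasd_scale (hasd_coord i IHU) (hasd_comp IHY (Hphi2 'e_i (Yt q k 0))).
have hS := hasd_sum hT.
have hG0 := hasd_sum (fun i : 'I_d => hasd_scale (hasd_coord i IHU) (hasd_comp IHY (Hq2 'e_i (Yt q k 0)))).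
have hG := hasd_scale (hasd_id 0) (hasd_scale hG0 (hasd_cst (e1 R d) 0)).
apply: (hasd_eq (hasd_add hS hG)).
  apply/funext => t; rewrite Ut_S // (diff_Phi q t _ Hq).2.
  rewrite (decomp (Hphi1 _)) (decomp (Hq1 _)) scalerA.
  by [].
rewrite /= Yt0 Ut0 scale0r add0r scale1r.
congr (_ + _); rewrite /bdat (deriveE _ (Hq1 _)) (decomp (Hq1 _)).
by [].
Qed.

Lemma YU_lin (I : finType) (c : I -> R) (a_ b_ : I -> nat -> R) k :
  (YU (fun k => \sum_x c x * a_ x k) (fun k => \sum_x c x * b_ x k) k).1
    = \sum_x c x *: (YU (a_ x) (b_ x) k).1 /\
  (YU (fun k => \sum_x c x * a_ x k) (fun k => \sum_x c x * b_ x k) k).2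
    = \sum_x c x *: (YU (a_ x) (b_ x) k).2.
Proof.
elim: k => [|k [IH1 IH2]].
  by split; rewrite /= big1 // => x _; rewrite scaler0.
split.
  rewrite /= IH1 linear_sum scaler_suml -big_split /=.
  apply: eq_bigr => x _.
  by rewrite linearZ /= scalerDr scalerA.
rewrite /= IH1 IH2 scaler_suml.
under [RHS]eq_bigr do rewrite scalerDr.
rewrite [RHS]big_split /=; congr (_ + _); last first.
  by apply: eq_bigr => x _; rewrite scalerA.
under [RHS]eq_bigr do rewrite scaler_sumr.
rewrite [RHS]exchange_big /=; apply: eq_bigr => i _.
rewrite linear_sum summxE scaler_sumr scaler_suml -big_split /=.
apply: eq_bigr => x _.
rewrite linearZ /= mxE scalerDr !scalerA mulrC.
by [].
Qed.

Lemma YU_zero a b n : (forall k, (k < n)%N -> a k = 0 /\ b k = 0) ->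
  YU a b n = (0, 0).
Proof.
elim: n => [|n IH] H.
  by [].
rewrite [YU a b n.+1]/=.
rewrite IH; last by move=> k lt; apply: H; exact: (ltn_trans lt).
have [-> ->] := H n (ltnSn n).
congr (_, _).
  rewrite scale0r addr0. exact: linear0.
rewrite scale0r addr0 big1 // => i _.
rewrite (_ : (0 : V) 0 i = 0); last by rewrite mxE.
rewrite scale0r addr0.
rewrite (_ : 'd ('D_'e_i phi) (yy n) 0 = 0); last exact: linear0.
by rewrite scaler0.
Qed.

Lemma YU_diag a b n : (forall k, (k < n)%N -> a k = 0 /\ b k = 0) ->
  (YU a b n.+1).2 = b n *: e1 R d.
Proof.
move=> H; rewrite [YU a b n.+1]/= YU_zero //; cbn [fst snd].
rewrite big1 ?add0r // => i _.
rewrite (_ : (0 : V) 0 i = 0); last by rewrite mxE.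
rewrite scale0r addr0.
rewrite (_ : 'd ('D_'e_i phi) (yy n) 0 = 0); last exact: linear0.
by rewrite scaler0.
Qed.

Definition q0 : V -> R := fun _ => 0.
Lemma Q2q0 : Q2 q0.
Proof.
have E : forall v, 'D_v q0 = q0.
  by move=> v; apply/funext => x; rewrite derive_cst.
split=> [x|v x]; last rewrite E; exact: differentiable_cst.
Qed.

Lemma uu_S k : uu k.+1 = 'd phi (yy k) (uu k).
Proof.
have := Ut_S q0 k 0 Q2q0.
rewrite Ut0 Yt0 Ut0.
by rewrite Phi0.
Qed.

Lemma uu0 : uu 0 = v1.
Proof. exact: (derive_id x1 v1). Qed.

End Dyn.

Lemma pi1E (R : realType) d (v : 'rV[R]_d) (i0 : 'I_d) : val i0 = 0%N -> pi1 v = v 0 i0.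
Proof.
move=> H; rewrite /pi1 (big_pred1 i0) // => i /=.
by rewrite -H (inj_eq val_inj).
Qed.

Lemma pi1_e1 (R : realType) d (i0 : 'I_d) : val i0 = 0%N -> pi1 (e1 R d) = 1.
Proof. by move=> H; rewrite (@pi1E R d (e1 R d) i0 H) mxE H eqxx. Qed.


Section Span.
Variables (R : realType) (d D : nat).
Local Notation V := 'rV[R]_d.
Local Notation MI := (multi_index d D).

Definition deg (a : MI) : nat := (\sum_i (val a i : nat))%N.

Definition inspan n (f : V -> R) := exists c : MI -> R,
  (forall a, c a != 0 -> (deg a <= n)%N) /\
  forall x, f x = \sum_a c a * p_alpha a x.

Lemma inspan_mono n m f : (n <= m)%N -> inspan n f -> inspan m f.
Proof.
move=> nm [c [Hc Hf]]; exists c; split => // a /Hc h; exact: leq_trans h nm.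
Qed.

Lemma inspan_lin n f g cc : inspan n f -> inspan n g ->
  inspan n (fun x => f x - cc * g x).
Proof.
move=> [c [Hc Hf]] [c' [Hc' Hg]]; exists (fun a => c a - cc * c' a); split.
  move=> a; have [/eqP ca|/Hc //] := boolP (c a == 0).
  rewrite ca sub0r oppr_eq0 mulf_eq0 negb_or => /andP [_]; exact: Hc'.
move=> x; rewrite Hf Hg mulr_sumr -sumrB; apply: eq_bigr => a _.
by rewrite mulrBl mulrA.
Qed.

Lemma inspan1 : (0 < D)%N -> inspan 0 (fun _ => 1).
Proof.
move=> D0.
have h2D : (0 < 2 * D)%N by rewrite muln_gt0.
pose o : 'I_(2 * D) := Ordinal h2D.
pose f0 : {ffun 'I_d -> 'I_(2 * D)} := [ffun _ => o].
have hf0 : (\sum_i (f0 i : nat) <= (2 * D).-1)%N by rewrite big1 // => i _; rewrite ffunE.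
pose a0 : MI := exist _ f0 hf0.
exists (fun a => (a == a0)%:R); split.
  move=> a; have [->|] := eqVneq a a0; last by rewrite eqxx.
  by rewrite /deg big1 // => i _; rewrite /= ffunE.
move=> x; rewrite (bigD1 a0) //= eqxx mul1r big1 ?addr0.
  by rewrite /p_alpha big1 // => i _; rewrite /= ffunE expr0.
by move=> a /negbTE ->; rewrite mul0r.
Qed.

Definition bump (k : 'I_d) (a : MI) : {ffun 'I_d -> 'I_(2 * D)} :=
  [ffun i => insubd (val a i) ((val a i : nat) + (i == k))%N].
Definition sh (k : 'I_d) (a : MI) : MI := insubd a (bump k a).

Lemma sum_ind (k : 'I_d) : (\sum_(i < d) (i == k) = 1)%N.
Proof. by rewrite (bigD1 k) //= eqxx big1 // => i /negbTE ->. Qed.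

Lemma sh_val (k : 'I_d) (a : MI) : (deg a < (2 * D).-1)%N ->
  forall i, (val (val (sh k a) i) : nat) = (val a i + (i == k))%N.
Proof.
move=> Ha.
have Hb : forall i, (val a i + (i == k) < 2 * D)%N.
  move=> i; have : (val a i <= deg a)%N by rewrite /deg (bigD1 i) //= leq_addr.
  move=> h2.
  have H3 : (val a i + (i == k) <= (2 * D).-1)%N.
    apply: leq_trans (leq_add h2 (leq_b1 _)) _; by rewrite addn1.
  apply: leq_ltn_trans H3 _; rewrite ltn_predL.
  by move: Ha; case: (2 * D)%N.
have Eb : forall i, (val (bump k a i) : nat) = (val a i + (i == k))%N.
  by move=> i; rewrite ffunE val_insubd Hb.
have Hs : (\sum_i (bump k a i : nat) <= (2 * D).-1)%N.
  under eq_bigr do rewrite Eb.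
  by rewrite big_split /= sum_ind addn1.
move=> i; rewrite /sh val_insubd Hs.
exact: Eb.
Qed.

Lemma deg_sh (k : 'I_d) (a : MI) : (deg a < (2 * D).-1)%N -> deg (sh k a) = (deg a).+1.
Proof.
move=> Ha; rewrite /deg; under eq_bigr do rewrite sh_val //.
by rewrite big_split /= sum_ind addn1.
Qed.

Lemma p_sh (k : 'I_d) (a : MI) (x : V) : (deg a < (2 * D).-1)%N ->
  p_alpha (sh k a) x = p_alpha a x * x 0 k.
Proof.
move=> Ha; rewrite /p_alpha; under eq_bigr do rewrite sh_val // exprD.
rewrite big_split /=; congr (_ * _).
rewrite (bigD1 k) //= eqxx expr1 big1 ?mulr1 // => i /negbTE ->.
by rewrite expr0.
Qed.

Lemma inspan_coord n f (k : 'I_d) : (n < (2 * D).-1)%N -> inspan n f ->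
  inspan n.+1 (fun x => f x * x 0 k).
Proof.
move=> Hn [c [Hc Hf]].
exists (fun b => \sum_(a | sh k a == b) c a); split.
  move=> b; have [a Ha|] := pickP (fun a => (sh k a == b) && (c a != 0)).
    move: Ha => /andP [/eqP <- /Hc ca] _.
    rewrite deg_sh ?ltnS //; exact: leq_ltn_trans ca Hn.
  move=> H0; rewrite big1 ?eqxx // => a /eqP sa.
  by have := H0 a; rewrite sa eqxx /= => /negbFE/eqP.
move=> x; rewrite Hf mulr_suml.
rewrite (partition_big (sh k) xpredT) //=.
apply: eq_bigr => b _; rewrite mulr_suml; apply: eq_bigr => a /eqP <-.
have [->|ca] := eqVneq (c a) 0; first by rewrite !mul0r.
rewrite p_sh ?mulrA //; exact: leq_ltn_trans (Hc _ ca) Hn.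
Qed.

Lemma inspan_aff n f (k : 'I_d) cc : (n < (2 * D).-1)%N -> inspan n f ->
  inspan n.+1 (fun x => f x * (x 0 k - cc)).
Proof.
move=> Hn Hf.
have H1 := @inspan_coord n f k Hn Hf.
have H2 := @inspan_mono n n.+1 f (leqnSn n) Hf.
have [c [Hc Hx]] := @inspan_lin n.+1 _ _ cc H1 H2.
exists c; split => // x; rewrite -Hx.
by rewrite mulrBr [cc * _]mulrC.
Qed.

End Span.


Arguments inspan_aff {R d D n f}.
Arguments inspan1 {R d D}.

Arguments Q2 {R d}.
Section Q2S.
Variables (R : realType) (d : nat).
Local Notation V := 'rV[R]_d.

Lemma coord_diff (i : 'I_d) (y : V) :
  differentiable (fun x : V => x 0 i) y /\ forall v, 'D_v (fun x : V => x 0 i) y = v 0 i.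
Proof.
have @f : {linear V -> R}.
  by exists (fun N : V => N 0 i); do 2![eexists]; do ?[constructor];
     rewrite ?mxE// => ? *; rewrite ?mxE//; move=> ?; rewrite !mxE.
have fc : continuous f by exact: coord_continuous.
have df := linear_differentiable y fc.
split; first exact: df.
move=> v; rewrite (deriveE _ df).
have h := diff_lin y fc.
by rewrite [LHS](congr1 (fun g => g v) h).
Qed.

Lemma D_mul (f g : V -> R) y v : differentiable f y -> differentiable g y ->
  'D_v (fun x => f x * g x) y = f y * 'D_v g y + g y * 'D_v f y.
Proof.
move=> df dg.
have -> : (fun x => f x * g x) = f * g by [].
by rewrite deriveM //; apply: diff_derivable.
Qed.

Lemma diffM' (f g : V -> R) y : differentiable f y -> differentiable g y ->
  differentiable (fun x => f x * g x) y.
Proof. move=> df dg; exact: differentiableM. Qed.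

Lemma Q2_cst (c : R) : Q2 (fun _ : V => c).
Proof.
have E : forall v, 'D_v (fun _ : V => c) = (fun _ => 0).
  by move=> v; apply/funext => x; rewrite derive_cst.
split=> [x|v x]; last rewrite E; exact: differentiable_cst.
Qed.

Lemma Q2_coord i : Q2 (fun x : V => x 0 i).
Proof.
have E : forall v, 'D_v (fun x : V => x 0 i) = (fun _ => v 0 i).
  by move=> v; apply/funext => x; rewrite (coord_diff i x).2.
split=> [x|v x]; first exact: (coord_diff i x).1.
rewrite E; exact: differentiable_cst.
Qed.

Lemma Q2_mul f g : Q2 f -> Q2 g -> Q2 (fun x : V => f x * g x).
Proof.
move=> [f1 f2] [g1 g2]; split=> [x|v x]; first exact: diffM'.
have -> : 'D_v (fun x => f x * g x) = fun y => f y * 'D_v g y + g y * 'D_v f y.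
  by apply/funext => y; rewrite D_mul.
apply: differentiableD; exact: diffM'.
Qed.

Lemma Q2_prod (I : Type) (r : seq I) (F : I -> V -> R) :
  (forall i, Q2 (F i)) -> Q2 (fun x => \prod_(i <- r) F i x).
Proof.
move=> HF; elim: r => [|i r IH].
  have -> : (fun x : V => \prod_(i <- [::]) F i x) = fun _ => 1.
    by apply/funext => x; rewrite big_nil.
  exact: Q2_cst.
have -> : (fun x : V => \prod_(j <- i :: r) F j x) = fun x => F i x * \prod_(j <- r) F j x.
  by apply/funext => x; rewrite big_cons.
exact: Q2_mul.
Qed.

Lemma Q2_exp f n : Q2 f -> Q2 (fun x : V => f x ^+ n).
Proof.
move=> Hf; elim: n => [|n IH].
  have -> : (fun x : V => f x ^+ 0) = fun _ => 1 by apply/funext => x; rewrite expr0.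
  exact: Q2_cst.
have -> : (fun x : V => f x ^+ n.+1) = fun x => f x * f x ^+ n.
  by apply/funext => x; rewrite exprS.
exact: Q2_mul.
Qed.

Lemma Q2_p D (a : multi_index d D) : Q2 (@p_alpha R d D a).
Proof.
have -> : p_alpha a = fun x : V => \prod_(i <- index_enum 'I_d) x 0 i ^+ (val a i : nat).
  by apply/funext => x; rewrite /p_alpha.
apply: Q2_prod => i; apply: Q2_exp; exact: Q2_coord.
Qed.

End Q2S.
Arguments coord_diff {R d}.
Arguments D_mul {R d}.
Arguments diffM' {R d}.
Arguments Q2_cst {R d}.
Arguments Q2_coord {R d}.
Arguments Q2_mul {R d f g}.
Arguments Q2_prod {R d}.
Arguments Q2_exp {R d}.
Arguments Q2_p {R d}.

Section QM.
Variables (R : realType) (d D : nat) (i0 : 'I_d).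
Local Notation V := 'rV[R]_d.
Variables (ys : nat -> V) (m : nat) (u : V).
Hypothesis Hdist : forall i, (i < m)%N -> ys i != ys m.
Hypothesis Hu : u != 0.

Definition zj (f : V -> R) y := f y = 0 /\ forall v, 'D_v f y = 0.

Lemma zjM_l (f g : V -> R) y : differentiable f y -> differentiable g y -> zj f y ->
  zj (fun x => f x * g x) y.
Proof.
move=> df dg [f0 f1]; split; first by rewrite f0 mul0r.
by move=> v; rewrite D_mul // f0 f1 mul0r mulr0 addr0.
Qed.

Lemma zjM_r (f g : V -> R) y : differentiable f y -> differentiable g y -> zj g y ->
  zj (fun x => f x * g x) y.
Proof.
move=> df dg [g0 g1]; split; first by rewrite g0 mulr0.
by move=> v; rewrite D_mul // g0 g1 mul0r mulr0 addr0.
Qed.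

Lemma aff_prop (k : 'I_d) (c : R) :
  Q2 (fun x : V => x 0 k - c) /\ forall v y, 'D_v (fun x : V => x 0 k - c) y = v 0 k.
Proof.
have E : forall v y, 'D_v (fun x : V => x 0 k - c) y = v 0 k.
  move=> v y.
  have -> : (fun x : V => x 0 k - c) = (fun x : V => x 0 k) - (fun _ => c) by [].
  rewrite deriveB; last exact: derivable_cst.
    by rewrite (coord_diff k y).2 derive_cst subr0.
  exact: diff_derivable (coord_diff k y).1.
split => //; split => [x|v x].
  have -> : (fun x : V => x 0 k - c) = (fun x : V => x 0 k) - (fun _ => c) by [].
  apply: differentiableB; [exact: (coord_diff k x).1 | exact: differentiable_cst].
have -> : 'D_v (fun x : V => x 0 k - c) = fun _ => v 0 k by apply/funext => y; rewrite E.
exact: differentiable_cst.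
Qed.

Lemma zj_sq (f : V -> R) y : differentiable f y -> f y = 0 -> zj (fun x => f x * f x) y.
Proof.
move=> df f0; split; first by rewrite f0 mul0r.
by move=> v; rewrite D_mul // f0 !mul0r addr0.
Qed.

Definition kk i := odflt i0 [pick j | ys m 0 j != ys i 0 j].
Definition kl := odflt i0 [pick j | u 0 j != 0].

Lemma kk_spec i : (i < m)%N -> ys m 0 (kk i) != ys i 0 (kk i).
Proof.
move=> im; rewrite /kk; case: pickP => [j //|H].
exfalso; move/negP: (Hdist i im); apply; apply/eqP/rowP => j.
by have := H j; move/negbFE/eqP => ->.
Qed.

Lemma kl_spec : u 0 kl != 0.
Proof.
rewrite /kl; case: pickP => [j //|H].
exfalso; move/negP: Hu; apply; apply/eqP/rowP => j.
by have := H j; move/negbFE/eqP => ->; rewrite mxE.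
Qed.

Definition mu i (x : V) := x 0 (kk i) - ys i 0 (kk i).
Definition PP n (x : V) := \prod_(i < n) (mu i x * mu i x).
Definition qm (x : V) := PP m x * (x 0 kl - ys m 0 kl).

Lemma Q2_mu i : Q2 (mu i).
Proof. exact: (aff_prop _ _).1. Qed.

Lemma Q2_PP n : Q2 (PP n).
Proof.
have -> : PP n = fun x : V => \prod_(i <- index_enum 'I_n) (mu i x * mu i x).
  by apply/funext => x; rewrite /PP.
apply: Q2_prod => i; apply: Q2_mul; exact: Q2_mu.
Qed.

Lemma PP_S n : PP n.+1 = fun x => PP n x * (mu n x * mu n x).
Proof. by apply/funext => x; rewrite /PP big_ord_recr. Qed.

Lemma PP_zj n k : (k < n)%N -> zj (PP n) (ys k).
Proof.
elim: n => [//|n IH] kn; rewrite PP_S.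
have dP := (Q2_PP n).1 (ys k).
have dM : differentiable (fun x => mu n x * mu n x) (ys k).
  exact: ((Q2_mul (Q2_mu n) (Q2_mu n)).1 (ys k)).
have [kn'|kn'] := ltnP k n.
  exact: zjM_l dP dM (IH kn').
have E : k = n by apply/eqP; rewrite eqn_leq kn' -ltnS kn.
apply: zjM_r dP dM _; rewrite E; apply: zj_sq; first exact: (Q2_mu n).1.
by rewrite /mu subrr.
Qed.

Lemma PP_neq0 n : (n <= m)%N -> PP n (ys m) != 0.
Proof.
elim: n => [|n IH] nm; first by rewrite /PP big_ord0 oner_neq0.
rewrite PP_S mulf_neq0 ?IH ?(ltnW nm) //.
have h : mu n (ys m) != 0 by rewrite /mu subr_eq0; exact: kk_spec.
by rewrite mulf_neq0.
Qed.

Lemma qm_zj k : (k < m)%N -> zj qm (ys k).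
Proof.
move=> km; apply: zjM_l; first exact: (Q2_PP m).1.
  exact: ((aff_prop _ _).1).1.
exact: PP_zj.
Qed.

Lemma qm_diag : 'D_u qm (ys m) != 0.
Proof.
rewrite /qm D_mul; first last.
- exact: ((aff_prop _ _).1).1.
- exact: (Q2_PP m).1.
rewrite (aff_prop _ _).2 subrr mul0r addr0 mulf_neq0 //; last exact: kl_spec.
exact: PP_neq0.
Qed.

Lemma PP_span n : (0 < D)%N -> (n <= m)%N -> (m < D)%N -> inspan R d D (2 * n) (PP n).
Proof.
move=> D0; elim: n => [|n IH] nm mD.
  have -> : PP 0 = fun _ => 1 by apply/funext => x; rewrite /PP big_ord0.
  exact: inspan1.
rewrite PP_S.
have h1 : (2 * n < (2 * D).-1)%N by lia.
have h2 : ((2 * n).+1 < (2 * D).-1)%N by lia.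
have H1 := inspan_aff (kk n) (ys n 0 (kk n)) h1 (IH (ltnW nm) mD).
have H2 := inspan_aff (kk n) (ys n 0 (kk n)) h2 H1.
have -> : (2 * n.+1 = (2 * n).+2)%N by lia.
have -> : (fun x => PP n x * (mu n x * mu n x)) =
  (fun x => PP n x * (x 0 (kk n) - ys n 0 (kk n)) * (x 0 (kk n) - ys n 0 (kk n))).
  by apply/funext => x; rewrite /mu mulrA.
exact: H2.
Qed.

Lemma qm_span : (0 < D)%N -> (m < D)%N -> inspan R d D (2 * m).+1 qm.
Proof.
move=> D0 mD.
have h1 : (2 * m < (2 * D).-1)%N by lia.
rewrite /qm; exact: inspan_aff kl (ys m 0 kl) h1 (PP_span m D0 (leqnn m) mD).
Qed.

End QM.


Arguments pi1E {R d v i0}.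
Arguments hasd_coord {R n F t dF} i.
Lemma D_sum_seq (R : realType) d (I : Type) (r : seq I) (F : I -> 'rV[R]_d -> R) y v :
  (forall i, differentiable (F i) y) ->
  differentiable (fun x => \sum_(i <- r) F i x) y /\
  'D_v (fun x => \sum_(i <- r) F i x) y = \sum_(i <- r) 'D_v (F i) y.
Proof.
move=> HF; elim: r => [|i r [IH1 IH2]].
  have -> : (fun x : 'rV[R]_d => \sum_(i <- [::]) F i x) = fun _ => 0.
    by apply/funext => x; rewrite big_nil.
  split; first exact: differentiable_cst.
  by rewrite derive_cst big_nil.
have -> : (fun x => \sum_(j <- i :: r) F j x) = F i + (fun x => \sum_(j <- r) F j x).
  by apply/funext => x; rewrite big_cons.
split; first exact: differentiableD.
rewrite deriveD ?big_cons ?IH2 //; exact: diff_derivable.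
Qed.

Lemma D_scal (R : realType) d (p : 'rV[R]_d -> R) (c : R) y v : differentiable p y ->
  'D_v (fun x => c * p x) y = c * 'D_v p y.
Proof.
move=> dp; have -> : (fun x => c * p x) = c *: p by [].
by rewrite deriveZ //; exact: diff_derivable.
Qed.

Lemma sum_enum_val (R : realType) (T : finType) (F : T -> R) :
  \sum_(k < #|{: T}|) F (enum_val k) = \sum_a F a.
Proof. rewrite -big_enum_val /=. apply: eq_bigl => a. by rewrite inE. Qed.

Lemma inj_of_inv (R : realType) d (phi g : 'rV[R]_d -> 'rV[R]_d) :
  cancel phi g -> (forall x, differentiable phi x) -> (forall x, differentiable g x) ->
  forall x w, 'd phi x w = 0 -> w = 0.
Proof.
move=> c dphi dg x w H.
have E : g \o phi = id by apply/funext => y; exact: c.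
have h := diff_comp (dphi x) (dg (phi x)).
have h' := congr1 (fun f => f w) h.
have h1 : 'd g (phi x) ('d phi x w) = 'd g (phi x) 0 := congr1 ('d g (phi x)) H.
have h0 : 'd g (phi x) 0 = 0 := linear0 _.
have h2 := congr1 (fun f => 'd f x w) E.
have hid : 'd id x = id :> ('rV[R]_d -> 'rV[R]_d) by rewrite diff_val.
have h3 := congr1 (fun f => f w) hid.
simpl in h2, h3.
by rewrite -h3 -h2 h' /= h1 h0.
Qed.

Section Final.
Variables (R : realType) (d D : nat).
Local Notation V := 'rV[R]_d.
Local Notation MI := (multi_index d D).
Variables (phi : V -> V) (x1 v1 : V).
Hypothesis Hphi1 : forall x, differentiable phi x.
Hypothesis Hphi2 : forall v x, differentiable ('D_v phi) x.
Variable (i0 : 'I_d).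
Hypothesis Hi0 : val i0 = 0%N.

Local Notation YU := (YU R d phi x1 v1).
Local Notation adat := (adat R d phi x1).
Local Notation bdat := (bdat R d phi x1 v1).

Lemma Hmat_entry j k :
  Hmat D phi x1 v1 j k =
  pi1 (YU (adat (p_alpha (enum_val k))) (bdat (p_alpha (enum_val k))) j.+1).2.
Proof.
rewrite mxE.
set al := enum_val k.
have Ephi : forall t, phi_c phi (fun a => if a == al then t else 0) = Phi R d phi (p_alpha al) t.
  move=> t; apply/funext => x; rewrite /phi_c /Phi; congr (_ + _); congr (_ *: _).
  rewrite (bigD1 al) //= eqxx big1 ?addr0 // => a /negbTE ->; by rewrite mul0r.
have -> : (fun t => pi1 ('D_v1 (iter j.+1 (phi_c phi (fun a => if a == al then t else 0))) x1))
   = (fun t => Ut R d phi x1 v1 (p_alpha al) j.+1 t 0 i0).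
  by apply/funext => t; rewrite Ephi (pi1E Hi0).
have [_ H2] := @YU_hasd R d phi x1 v1 Hphi1 Hphi2 _ (Q2_p _ al) j.+1.
have [H3 H4] := hasd_coord i0 H2.
by rewrite derive1E' // H4 (pi1E Hi0).
Qed.

Lemma data_lin (c : MI -> R) (q : V -> R) n :
  (forall x, q x = \sum_a c a * p_alpha a x) ->
  pi1 (YU (adat q) (bdat q) n).2 =
  \sum_a c a * pi1 (YU (adat (p_alpha a)) (bdat (p_alpha a)) n).2.
Proof.
move=> Hq.
have Eq : q = fun x => \sum_a c a * p_alpha a x by apply/funext.
have Ea : adat q = fun k => \sum_a c a * adat (p_alpha a) k.
  by apply/funext => k; rewrite /adat Hq.
have Eb : bdat q = fun k => \sum_a c a * bdat (p_alpha a) k.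
  apply/funext => k; rewrite /bdat Eq.
  rewrite (@D_sum_seq R d MI (index_enum MI) (fun a x => c a * p_alpha a x) (yy R d phi x1 k) (uu R d phi x1 v1 k) _).2; last first.
    move=> a; have -> : (fun x => c a * p_alpha a x) = c a *: p_alpha a by [].
    apply: differentiableZ; exact: (Q2_p _ a).1.
  apply: eq_bigr => a _; rewrite D_scal //; exact: (Q2_p _ a).1.
rewrite Ea Eb (YU_lin R d phi x1 v1 MI c (fun a => adat (p_alpha a)) (fun a => bdat (p_alpha a)) n).2.
rewrite (pi1E Hi0) summxE; apply: eq_bigr => a _.
by rewrite mxE (pi1E Hi0).
Qed.

Lemma uu_neq0 (Hinj : forall x w, 'd phi x w = 0 -> w = 0) (Hv : v1 != 0) k :
  uu R d phi x1 v1 k != 0.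
Proof.
elim: k => [|k IH]; first by rewrite uu0.
rewrite (@uu_S R d phi x1 v1 Hphi1 k); apply/eqP => /Hinj /eqP; exact/negP.
Qed.

Lemma rank_full (Hinj : forall x w, 'd phi x w = 0 -> w = 0) (Hv : v1 != 0)
  (Hdist : forall i j : 'I_D.-1, iter i phi x1 = iter j phi x1 -> i = j)
  (D2 : (1 < D)%N) :
  \rank (Hmat D phi x1 v1) = D.-1.
Proof.
pose ys := yy R d phi x1.
pose Q (m : 'I_D.-1) := qm R d i0 ys m (uu R d phi x1 v1 m).
have Hd' : forall (m : 'I_D.-1) i, (i < m)%N -> ys i != ys m.
  move=> m i im; apply/eqP => E.
  have iD : (i < D.-1)%N by exact: ltn_trans im (ltn_ord m).
  have := Hdist (Ordinal iD) m E => /(congr1 val) /= ei.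
  by move: im; rewrite ei ltnn.
have hspan : forall m : 'I_D.-1, inspan R d D (2 * m).+1 (Q m).
  move=> m; apply: qm_span; first exact: uu_neq0.
    by lia.
  have := ltn_ord m; lia.
have [cm Hcm] := boolp.choice hspan.
pose B : 'M[R]_(#|{: MI}|, D.-1) := \matrix_(k, m) cm m (enum_val k).
pose A := Hmat D phi x1 v1 *m B.
have HA : forall j m, A j m = pi1 (YU (adat (Q m)) (bdat (Q m)) j.+1).2.
  move=> j m; rewrite mxE.
  under eq_bigr do rewrite Hmat_entry mxE.
  rewrite (@sum_enum_val R MI (fun a => pi1 (YU (adat (p_alpha a)) (bdat (p_alpha a)) j.+1).2 * cm m a)).
  rewrite (data_lin (cm m)); last exact: (Hcm m).2.
  by apply: eq_bigr => a _; rewrite mulrC.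
have Hzero : forall (m : 'I_D.-1) k, (k < m)%N -> adat (Q m) k = 0 /\ bdat (Q m) k = 0.
  move=> m k km; have [z1 z2] := @qm_zj R d i0 ys m (uu R d phi x1 v1 m) k km.
  by split; [exact: z1 | exact: z2].
have trig : is_trig_mx A.
  apply/forallP => j; apply/forallP => m; apply/implyP => jm; apply/eqP.
  rewrite HA YU_zero; first by rewrite /= (pi1E Hi0) mxE.
  move=> k kj; apply: Hzero; exact: leq_trans kj jm.
have diag : forall m, A m m != 0.
  move=> m; rewrite HA YU_diag; last exact: Hzero.
  rewrite (pi1E Hi0) !mxE Hi0 eqxx mulr1.
  exact: qm_diag (Hd' m) (uu_neq0 Hinj Hv m).
have unitA : A \in unitmx.
  rewrite unitmxE unitfE det_trig //; apply/prodf_neq0 => m _; exact: diag.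
apply/eqP; rewrite eqn_leq rank_leq_row /=.
rewrite -{1}(mxrank_unit unitA); exact: mxrankM_maxl.
Qed.

End Final.

Theorem lemma12 (R : realType) (d D : nat) (phi : 'rV[R]_d -> 'rV[R]_d)
    (x1 v1 : 'rV[R]_d) :
  (0 < d)%N ->
  C2_diffeo phi ->
  sqnorm v1 = 1 ->
  (forall i j : 'I_D.-1, iter i phi x1 = iter j phi x1 -> i = j) ->
  \rank (Hmat D phi x1 v1) = D.-1.
Proof.
move=> d0 [[Hphi1 [Hphi2 _]] [g [cg [_ [Hg1 _]]]]] Hv Hdist.
have Hinj := @inj_of_inv R d phi g cg Hphi1 Hg1.
have Hv1 : v1 != 0.
  apply/eqP => v0; move: Hv; rewrite v0 /sqnorm big1 => [/eqP|i _].
    by rewrite eq_sym oner_eq0.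
  by rewrite mxE expr0n.
pose i0 : 'I_d := Ordinal d0.
have [D1|D2] := leqP D 1.
  apply/eqP; rewrite eqn_leq rank_leq_row /=.
  apply: (leq_trans (_ : D.-1 <= 0)%N (leq0n _)); lia.
exact: (@rank_full R d D phi x1 v1 Hphi1 Hphi2 i0 erefl Hinj Hv1 Hdist D2).
Qed.
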